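(* Let $k$ be a field. If $F$ is a strictly additive and $G$ an additive (abelian group)-valued $k$-functor, and $\pi\colon F\to G$ is an epimorphism in the category of (abelian group)-valued $k$-functors, then $G$ is strictly additive.
   Context: A $k$-functor is a functor from commutative $k$-algebras to abelian groups. Epimorphisms are objectwise surjective. $\mathbb{G}_a^\alpha$ ($\alpha\in\{0,1,\dots,\infty\}$) is $B\mapsto\bigoplus_{i=1}^\alpha B$. A functor is strictly additive if it is isomorphic to some $\mathbb{G}_a^\alpha$. It is additive if it admits a filtration $0=F_0\subset F_1\subset\cdots\subset F_n=F$ by subfunctors whose successive quotients are strictly additive. *)

(* Defs.v *)
From HB Require Import structures.
From mathcomp Require Import all_boot all_order all_algebra.
Set Implicit Arguments. Unset Strict Implicit. Unset Printing Implicit Defensive.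
Import GRing.Theory.
Local Open Scope ring_scope.

Record kAlg (k : fieldType) := KAlg {
  kAlg_ring :> comPzRingType;
  kAlg_str : {rmorphism k -> kAlg_ring} }.

Record kHom (k : fieldType) (A B : kAlg k) := KHom {
  kHom_fun :> {rmorphism A -> B};
  kHom_str : forall c : k, kHom_fun (kAlg_str A c) = kAlg_str B c }.

Record kFunctor (k : fieldType) := KFunctor {
  kF_obj :> kAlg k -> zmodType;
  kF_map : forall A B : kAlg k, kHom A B -> kF_obj A -> kF_obj B;
  kF_map_add : forall (A B : kAlg k) (f : kHom A B) (x y : kF_obj A),
      kF_map f (x + y) = kF_map f x + kF_map f y;
  kF_map_id : forall (A : kAlg k) (f : kHom A A),
      (forall a, f a = a) -> forall x, kF_map f x = x;
  kF_map_comp : forall (A B C : kAlg k) (f : kHom A B) (g : kHom B C)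
      (h : kHom A C), (forall a, h a = g (f a)) ->
      forall x, kF_map h x = kF_map g (kF_map f x) }.

Record kNat (k : fieldType) (F G : kFunctor k) := KNat {
  kN_fun :> forall A : kAlg k, F A -> G A;
  kN_add : forall A (x y : F A), @kN_fun A (x + y) = @kN_fun A x + @kN_fun A y;
  kN_natural : forall (A B : kAlg k) (f : kHom A B) (x : F A),
      @kN_fun B (kF_map f x) = kF_map f (@kN_fun A x) }.

(* Epimorphisms are objectwise surjective. *)
Definition kEpi (k : fieldType) (F G : kFunctor k) (pi : kNat F G) : Prop :=
  forall (A : kAlg k) (y : G A), exists x : F A, pi A x = y.

(* alpha : option nat, with None standing for infinity.
   Ga_elt alpha B s : s is an element of  G_a^alpha(B) = (+)_{i < alpha} B,
   represented as a finitely supported sequence nat -> B vanishing at i >= alpha. *)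
Definition Ga_elt (alpha : option nat) (B : comPzRingType) (s : nat -> B) : Prop :=
  (exists n, forall i, (n <= i)%N -> s i = 0) /\
  (forall i, if alpha is Some n then (n <= i)%N -> s i = 0 else True).

Definition is_subfunctor (k : fieldType) (G : kFunctor k)
    (S : forall A : kAlg k, G A -> Prop) : Prop :=
  (forall A, S A 0) /\
  (forall A x y, S A x -> S A y -> S A (x - y)) /\
  (forall A B (f : kHom A B) x, S A x -> S B (kF_map f x)).

(* For subfunctors S <= T of G, the quotient functor T/S is isomorphic to
   G_a^alpha; by the first isomorphism theorem (objectwise) this amounts to a
   natural additive map phi : T -> G_a^alpha which is objectwise surjective
   with kernel exactly S. *)
Definition subquot_iso_Ga (k : fieldType) (G : kFunctor k)
    (S T : forall A : kAlg k, G A -> Prop) (alpha : option nat) : Prop :=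
  exists phi : forall A : kAlg k, G A -> nat -> A,
    (forall (A : kAlg k) x y i, T A x -> T A y -> phi A (x + y) i = phi A x i + phi A y i) /\
    (forall (A : kAlg k) x, T A x -> Ga_elt alpha (phi A x)) /\
    (forall (A : kAlg k) (s : nat -> A), Ga_elt alpha s -> exists x, T A x /\ phi A x = s) /\
    (forall (A : kAlg k) x, T A x -> ((forall i, phi A x i = 0) <-> S A x)) /\
    (forall (A B : kAlg k) (f : kHom A B) x i, T A x ->
        phi B (kF_map f x) i = f (phi A x i)).

Definition strictly_additive (k : fieldType) (F : kFunctor k) : Prop :=
  exists alpha : option nat,
    subquot_iso_Ga (fun A (x : F A) => x = 0) (fun _ _ => True) alpha.

Definition additive (k : fieldType) (F : kFunctor k) : Prop :=
  exists (n : nat) (Fi : nat -> forall A : kAlg k, F A -> Prop),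
    (forall i, is_subfunctor (Fi i)) /\
    (forall A (x : F A), Fi 0%N A x <-> x = 0) /\
    (forall A (x : F A), Fi n A x) /\
    (forall i A (x : F A), (i < n)%N -> Fi i A x -> Fi i.+1 A x) /\
    (forall i, (i < n)%N -> exists alpha, subquot_iso_Ga (Fi i) (Fi i.+1) alpha).

(* Main.v *)
Require Import Defs.
From mathcomp Require Import all_boot all_order all_algebra.
From HB Require Import structures.
From mathcomp Require Import ring.
From Stdlib Require Import FunctionalExtensionality ClassicalEpsilon Classical.

Module Aux.

Set Implicit Arguments. Unset Strict Implicit. Unset Printing Implicit Defensive.
Import GRing.Theory.
Local Open Scope ring_scope.

Section E.
Variable k : fieldType.

Definition E (n : nat) : bool :=
  (0 < n)%N && [forall j : 'I_n, (0 < j)%N ==> ('C(n, j)%:R == 0 :> k)].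

Lemma EP n : reflect ((0 < n)%N /\ forall j, (0 < j < n)%N -> 'C(n, j)%:R = 0 :> k) (E n).
Proof.
apply: (iffP andP) => [[-> /forallP H]|[-> H]]; split => //.
  move=> j /andP[j0 jn]; have := H (Ordinal jn); rewrite j0 /=; by move/eqP.
apply/forallP => j; apply/implyP => j0; apply/eqP; apply: H; by rewrite j0 ltn_ord.
Qed.

Lemma coef1X n j : ((1 + 'X : {poly k}) ^+ n)`_j = ('C(n, j))%:R.
Proof.
rewrite addrC exprD1n coef_sum.
rewrite (eq_bigr (fun i : 'I_n.+1 => if (i == j :> nat) then ('C(n, i))%:R else 0)); last first.
  by move=> i _; rewrite coefMn coefXn (eq_sym j); case: eqP => _; rewrite ?mul0rn.
rewrite -big_mkcond (big_ord1_eq _ (fun i => ('C(n, i))%:R)) /= ltnS.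
case: leqP => // hj; by rewrite bin_small.
Qed.

Lemma Epoly n : (0 < n)%N -> (forall j, (0 < j < n)%N -> 'C(n, j)%:R = 0 :> k) <->
  (1 + 'X : {poly k}) ^+ n = 1 + 'X ^+ n.
Proof.
move=> n0; split => [H|H].
  apply/polyP => j; rewrite coef1X coefD coef1 coefXn.
  case: (posnP j) => [->|j0]; first by rewrite bin0 eq_sym (gtn_eqF n0) addr0.
  rewrite add0r.
  case: (ltngtP j n) => [jn|nj|->]; first by rewrite H ?j0.
    by rewrite bin_small.
  by rewrite binn.
move=> j /andP[j0 jn]; have := congr1 (fun p : {poly k} => p`_j) H.
by rewrite /= coef1X coefD coef1 coefXn (gtn_eqF j0) (ltn_eqF jn) addr0.
Qed.

Lemma E_poly n : E n -> (1 + 'X : {poly k}) ^+ n = 1 + 'X ^+ n.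
Proof. by move=> /EP[n0 H]; apply/Epoly. Qed.

Lemma poly_E n : (0 < n)%N -> (1 + 'X : {poly k}) ^+ n = 1 + 'X ^+ n -> E n.
Proof. by move=> n0 H; apply/EP; split => //; apply/Epoly. Qed.

Lemma E1 : E 1.
Proof. by apply/EP; split => // j /andP[j0 j1]; move: j1; rewrite ltnS leqn0 (gtn_eqF j0). Qed.

Lemma E_gt0 n : E n -> (0 < n)%N.
Proof. by case/andP. Qed.

Lemma comp1X m n : ((1 + 'X : {poly k}) ^+ n) \Po 'X^m = (1 + 'X^m) ^+ n.
Proof. by rewrite rmorphXn /= comp_polyD comp_polyC comp_polyX. Qed.

Lemma Emul m n : E m -> E n -> E (m * n).
Proof.
move=> Em En; apply: poly_E; first by rewrite muln_gt0 !E_gt0.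
by rewrite exprM E_poly // -comp1X E_poly // comp_polyD comp_polyC rmorphXn /= comp_polyX -exprM.
Qed.

Lemma Ecancel m n : E (m * n) -> E n -> E m.
Proof.
move=> Emn En; have n0 := E_gt0 En.
have m0 : (0 < m)%N by have := E_gt0 Emn; rewrite muln_gt0 => /andP[].
apply/EP; split => // j /andP[j0 jm].
have H : (1 + 'X : {poly k}) ^+ (m * n) = ((1 + 'X) ^+ m) \Po 'X^n.
  by rewrite comp1X -E_poly // -exprM mulnC.
have := congr1 (fun p : {poly k} => p`_(j * n)) H.
rewrite /= coef_comp_poly_Xn // dvdn_mull // mulnK // E_poly // coefD coef1 coefXn.
rewrite muln_eq0 (gtn_eqF j0) (gtn_eqF n0) /= eqn_mul2r (gtn_eqF n0) (ltn_eqF jm) addr0.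
by rewrite coef1X => <-.
Qed.

Lemma E_exprD (B : comPzRingType) (f : {rmorphism k -> B}) n (u w : B) :
  E n -> (u + w) ^+ n = u ^+ n + w ^+ n.
Proof.
move=> /EP[n0 H]; rewrite exprDn.
case: n n0 H => // n _ H.
rewrite big_ord_recr big_ord_recl /= subnn subn0 !bin0 binn !expr0 mulr1 mul1r.
rewrite big1 ?add0r ?addr0 ?mulr1n // => i _.
rewrite -mulr_natr -(rmorph_nat f) H ?rmorph0 ?mulr0 //=.
by rewrite /bump /= add1n ltnS ltn_ord.
Qed.

End E.

Set Implicit Arguments. Unset Strict Implicit. Unset Printing Implicit Defensive.
Import GRing.Theory.
Local Open Scope ring_scope.

Section Ev.
Variable k : fieldType.

Definition PA : kAlg k := @KAlg k {poly k} (polyC : {rmorphism k -> {poly k}}).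
Definition B2 : kAlg k := @KAlg k {poly {poly k}} ((polyC : {rmorphism {poly k} -> _}) \o (polyC : {rmorphism k -> {poly k}}) : {rmorphism k -> _}).

Definition ev (B : kAlg k) (u : B) (p : {poly k}) : B :=
  \sum_(i < size p) kAlg_str B p`_i * u ^+ i.

Lemma ev_widen (B : kAlg k) (u : B) (p : {poly k}) n : (size p <= n)%N ->
  ev u p = \sum_(i < n) kAlg_str B p`_i * u ^+ i.
Proof.
move=> hn; rewrite /ev (big_ord_widen n (fun i => kAlg_str B p`_i * u ^+ i) hn).
rewrite big_mkcond /=; apply: eq_bigr => i _.
case: ltnP => // hi; by rewrite nth_default // rmorph0 mul0r.
Qed.

Lemma evD (B : kAlg k) (u : B) p q : ev u (p + q) = ev u p + ev u q.
Proof.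
set n := maxn (size p) (size q).
rewrite (@ev_widen _ _ (p+q) n) ?(@ev_widen _ _ p n) ?(@ev_widen _ _ q n).
- rewrite -big_split /=; apply: eq_bigr => i _; by rewrite coefD rmorphD mulrDl.
- exact: leq_maxr. - exact: leq_maxl.
- apply: leq_trans (size_polyD _ _) _; by rewrite /n.
Qed.

Lemma evC (B : kAlg k) (u : B) c : ev u c%:P = kAlg_str B c.
Proof.
rewrite (@ev_widen _ _ _ 1) ?size_polyC ?leq_b1 // big_ord1 coefC /= expr0 mulr1 //.
Qed.

Lemma evMX (B : kAlg k) (u : B) p : ev u (p * 'X) = ev u p * u.
Proof.
rewrite (@ev_widen _ _ _ (size p).+1); last first.
  by case: (eqVneq p 0) => [->|pn0]; rewrite ?mul0r ?size_poly0 // size_mulX.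
rewrite big_ord_recl coefMX /= rmorph0 mul0r add0r /ev mulr_suml.
apply: eq_bigr => i _; by rewrite coefMX /= exprSr mulrA.
Qed.

Lemma evCM (B : kAlg k) (u : B) c p : ev u (c%:P * p) = kAlg_str B c * ev u p.
Proof.
rewrite (@ev_widen _ _ _ (size p)); last by rewrite mul_polyC size_scale_leq.
rewrite /ev mulr_sumr; apply: eq_bigr => i _; by rewrite coefCM rmorphM mulrA.
Qed.

Lemma evM (B : kAlg k) (u : B) p q : ev u (p * q) = ev u p * ev u q.
Proof.
elim/poly_ind: p => [|p c IH]; first by rewrite mul0r /ev size_poly0 !big_ord0 mul0r.
rewrite mulrDl evD evD -mulrA (mulrC 'X q) mulrA !evMX IH evCM evC; ring.
Qed.

Lemma ev0 (B : kAlg k) (u : B) : ev u 0 = 0.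
Proof. by rewrite /ev size_poly0 big_ord0. Qed.
Lemma ev1 (B : kAlg k) (u : B) : ev u 1 = 1.
Proof. by rewrite -polyC1 evC rmorph1. Qed.
Lemma evX (B : kAlg k) (u : B) : ev u 'X = u.
Proof. by rewrite -(mul1r 'X) evMX ev1 mul1r. Qed.

Definition evf (B : kAlg k) (u : B) : {poly k} -> B := ev u.
End Ev.

HB.instance Definition _ (k : fieldType) (B : kAlg k) (u : B) :=
  GRing.isNmodMorphism.Build {poly k} B (evf u) (ev0 u, evD u).
HB.instance Definition _ (k : fieldType) (B : kAlg k) (u : B) :=
  GRing.isMonoidMorphism.Build {poly k} B (evf u) (ev1 u, evM u).

Definition evk (k : fieldType) (B : kAlg k) (u : B) : kHom (PA k) B :=
  @KHom k (PA k) B (evf u : {rmorphism PA k -> B}) (evC u).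

Lemma evkE (k : fieldType) (B : kAlg k) (u : B) p : evk u p = ev u p.
Proof. by []. Qed.

Set Implicit Arguments. Unset Strict Implicit. Unset Printing Implicit Defensive.
Import GRing.Theory.
Local Open Scope ring_scope.

Section Bivar.
Variable k : fieldType.
Local Notation P2 := {poly {poly k}}.

Lemma ev_B2E (u : P2) (p : {poly k}) :
  ev (B:=B2 k) u p = \sum_(m < size p) (p`_m)%:P%:P * u ^+ m.
Proof. by []. Qed.

Lemma coef2CC (c : k) (q : P2) j i : (((c%:P%:P * q)`_j)`_i) = c * (q`_j)`_i.
Proof. by rewrite coefCM coefCM. Qed.

Lemma sum_single (p : {poly k}) (b : nat -> bool) m0 :
  (forall m, b m -> m = m0) ->
  \sum_(m < size p) p`_m * (b m)%:R = if b m0 then p`_m0 else 0.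
Proof.
move=> hb.
rewrite (eq_bigr (fun m : 'I_(size p) => if (m == m0 :> nat) then (if b m0 then p`_m0 else 0) else 0)); last first.
  move=> m _; case: eqP => [->|ne]; first by case: (b m0); rewrite ?mulr1 ?mulr0.
  by case E: (b m); [have := hb _ E|rewrite mulr0].
rewrite -big_mkcond (big_ord1_eq _ (fun _ => if b m0 then p`_m0 else 0)).
case: ltnP => // hs; case: (b m0) => //; by rewrite nth_default.
Qed.

Lemma sum_single2 (p : {poly k}) (g : nat -> k) (m0 : nat) :
  \sum_(m < size p) p`_m * g m * (m == m0 :> nat)%:R = p`_m0 * g m0.
Proof.
under eq_bigr => m _ do rewrite mulr_natr mulrb.
rewrite -big_mkcond (big_ord1_eq _ (fun m => p`_m * g m)).
case: ltnP => // hs; by rewrite nth_default ?mul0r.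
Qed.

Lemma coef2_pow m j i :
  (((('X : {poly k})%:P + 'X : P2) ^+ m)`_j)`_i = ('C(m, j) * (m == i + j))%:R.
Proof.
rewrite exprDn coef_sum.
rewrite (eq_bigr (fun r : 'I_m.+1 => if (r == j :> nat) then ('X^(m - j) : {poly k}) *+ 'C(m, j) else 0)); last first.
  move=> r _; rewrite -rmorphXn coefMn coefCM coefXn (eq_sym j).
  by case: eqP => [->|_]; rewrite ?mulr1 ?mulr0 ?mul0rn.
rewrite -big_mkcond (big_ord1_eq _ (fun _ => ('X^(m - j) : {poly k}) *+ 'C(m, j))) ltnS.
case: leqP => hj; last by rewrite coef0 bin_small.
rewrite coefMn coefXn natrM (_ : (i == m - j)%N = (m == i + j)%N); last first.
  by apply/eqP/eqP => [->|->]; rewrite ?subnK ?addnK.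
by case: eqP => _; rewrite ?mulr1 ?mulr0 ?mul0rn.
Qed.

Lemma coef2_ev_sum (p : {poly k}) (u : P2) j i :
  ((ev (B:=B2 k) u p)`_j)`_i = \sum_(m < size p) p`_m * ((u ^+ m)`_j)`_i.
Proof.
rewrite ev_B2E coef_sum coef_sum; apply: eq_bigr => m _; by rewrite coef2CC.
Qed.

Lemma coef2_CX m j i :
  (((('X : {poly k})%:P : P2) ^+ m)`_j)`_i = ((j == 0%N) && (i == m))%:R.
Proof.
rewrite -rmorphXn coefC; case: eqP => _ /=; last by rewrite coef0.
by rewrite coefXn.
Qed.

Lemma coef2_XX m j i : ((('X : P2) ^+ m)`_j)`_i = ((j == m) && (i == 0%N))%:R.
Proof.
rewrite coefXn; case: eqP => _ /=; last by rewrite coef0.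
by rewrite coef1.
Qed.

Lemma bivar (p : {poly k}) :
  ev (B:=B2 k) (('X : {poly k})%:P + 'X) p = ev (B:=B2 k) ('X : {poly k})%:P p + ev (B:=B2 k) 'X p ->
  forall n, p`_n != 0 -> E k n.
Proof.
move=> H.
have key : forall j i, p`_(i + j) * ('C(i + j, j))%:R = (if j == 0%N then p`_i else 0) + (if i == 0%N then p`_j else 0).
  move=> j i; have := congr1 (fun q : P2 => (q`_j)`_i) H.
  rewrite /= coefD coefD !coef2_ev_sum.
  under eq_bigr => m _ do rewrite coef2_pow natrM mulrA.
  under [X in _ = X + _]eq_bigr => m _ do rewrite coef2_CX.
  under [X in _ = _ + X]eq_bigr => m _ do rewrite coef2_XX.
  rewrite (@sum_single p (fun m => (j == 0%N) && (i == m)) i); last by move=> m /andP[_ /eqP].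
  rewrite (@sum_single p (fun m => (j == m) && (i == 0%N)) j); last by move=> m /andP[/eqP].
  by rewrite eqxx andbT /= (@sum_single2 p (fun m => ('C(m, j))%:R) (i + j)%N) eqxx.
move=> n pn; apply/EP; split.
  case: (posnP n) => // n0; move: pn; rewrite n0 => pn.
  have := key 0%N 0%N; rewrite bin0 mulr1 /= => /eqP.
  by rewrite -{1}(addr0 p`_0) (inj_eq (@addrI _ _)) eq_sym (negbTE pn).
move=> j /andP[j0 jn]; have := key j (n - j)%N.
rewrite subnK ?(ltnW jn) // (gtn_eqF j0) subn_eq0 leqNgt jn /= addr0 => /eqP.
by rewrite mulf_eq0 (negbTE pn) /= => /eqP.
Qed.
End Bivar.

Set Implicit Arguments. Unset Strict Implicit. Unset Printing Implicit Defensive.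
Import GRing.Theory.
Local Open Scope ring_scope.

Section Vec.
Variable k : fieldType.

Lemma Ga_elt0 al (A : comPzRingType) : Ga_elt al (fun _ => 0 : A).
Proof. split; first by exists 0%N. by move=> i; case: al. Qed.

Lemma Ga_elt_map al (A B : comPzRingType) (f : A -> B) (s : nat -> A) :
  f 0 = 0 -> Ga_elt al s -> Ga_elt al (fun i => f (s i)).
Proof.
move=> f0 [[n hn] ha]; split; first by exists n => i /hn ->.
move=> i; move: (ha i); case: al {ha} => // m h /h ->; exact: f0.
Qed.

Lemma Ga_eltD al (A : comPzRingType) (s t : nat -> A) :
  Ga_elt al s -> Ga_elt al t -> Ga_elt al (fun i => s i + t i).
Proof.
move=> [[n hn] ha] [[m hm] hb]; split.
  exists (maxn n m) => i; rewrite geq_max => /andP[/hn -> /hm ->]; exact: addr0.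
move=> i; move: (ha i) (hb i); case: al {ha hb} => // p h1 h2 hi; by rewrite h1 // h2 // addr0.
Qed.

Lemma Ga_eltN al (A : comPzRingType) (s : nat -> A) :
  Ga_elt al s -> Ga_elt al (fun i => - s i).
Proof. by move=> h; apply: (Ga_elt_map (f := fun x : A => - x)) => //; rewrite oppr0. Qed.

Lemma Ga_elt_sum al (A : comPzRingType) (N : nat) (F : nat -> nat -> A) :
  (forall l, (l < N)%N -> Ga_elt al (F l)) -> Ga_elt al (fun i => \sum_(l < N) F l i).
Proof.
elim: N => [|N IH] H.
  have -> : (fun i => \sum_(l < 0) F l i) = fun _ => 0.
    by apply: functional_extensionality => i; rewrite big_ord0.
  exact: Ga_elt0.
have -> : (fun i => \sum_(l < N.+1) F l i) = fun i => \sum_(l < N) F l i + F N i.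
  by apply: functional_extensionality => i; rewrite big_ord_recr.
apply: Ga_eltD; first by apply: IH => l hl; apply: H; exact: ltnW.
exact: H.
Qed.

Lemma sum_tail (R : zmodType) M1 M2 (f : nat -> R) : (M1 <= M2)%N ->
  (forall l, (M1 <= l)%N -> (l < M2)%N -> f l = 0) ->
  \sum_(l < M2) f l = \sum_(l < M1) f l.
Proof.
move=> h H; rewrite (big_ord_widen M2 f h) [RHS]big_mkcond /=.
apply: eq_bigr => i _; case: ltnP => // hi; by rewrite H.
Qed.

End Vec.

Section Poly.
Variable k : fieldType.

Definition suppE (p : {poly k}) := forall r, p`_r != 0 -> E k r.
Definition addpart (p : {poly k}) : {poly k} := \poly_(m < size p) (if E k m then p`_m else 0).

Lemma coef_addpart p r : (addpart p)`_r = if E k r then p`_r else 0.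
Proof.
rewrite coef_poly; case: ltnP => // h; case: (E k r) => //; by rewrite nth_default.
Qed.

Lemma addpart_supp p : suppE (addpart p).
Proof. move=> r; rewrite coef_addpart; by case: (E k r); rewrite ?eqxx. Qed.

Lemma addpart0 : addpart 0 = 0.
Proof. apply/polyP => r; rewrite coef_addpart coef0; by case: (E k r). Qed.

Lemma ev_suppD (B : kAlg k) (u w : B) p : suppE p -> ev (u + w) p = ev u p + ev w p.
Proof.
move=> hp; rewrite /ev -big_split /=; apply: eq_bigr => r _.
case: (eqVneq p`_r 0) => [->|pr]; first by rewrite rmorph0 !mul0r addr0.
by rewrite (E_exprD (kAlg_str B) _ _ (hp _ pr)) mulrDr.
Qed.

Lemma ev_supp0 (B : kAlg k) p : suppE p -> ev (0 : B) p = 0.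
Proof.
move=> hp; rewrite /ev big1 // => r _.
case: (eqVneq p`_r 0) => [->|pr]; first by rewrite rmorph0 mul0r.
by rewrite expr0n (gtn_eqF (E_gt0 (hp _ pr))) mulr0.
Qed.

Lemma ev_nat (A B : kAlg k) (f : kHom A B) (u : A) p : f (ev u p) = ev (f u) p.
Proof.
rewrite /ev rmorph_sum; apply: eq_bigr => r _; by rewrite rmorphM rmorphXn kHom_str.
Qed.

Lemma ev_PA (u : {poly k}) p : ev (B:=PA k) u p = p \Po u.
Proof. rewrite comp_polyE /ev; apply: eq_bigr => r _; by rewrite mul_polyC. Qed.

End Poly.

Unset Implicit Arguments.
Section KL.
Variable k : fieldType.
Variables (al be : option nat) (Psi : forall A : kAlg k, (nat -> A) -> nat -> A).
Hypothesis Hadd : forall (A : kAlg k) (s t : nat -> A), Ga_elt al s -> Ga_elt al t ->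
  Psi A (fun i => s i + t i) = (fun i => Psi A s i + Psi A t i).
Hypothesis Hnat : forall (A B : kAlg k) (f : kHom A B) (s : nat -> A), Ga_elt al s ->
  Psi B (fun i => f (s i)) = (fun i => f (Psi A s i)).

Lemma Psi0 (A : kAlg k) : Psi A (fun _ => 0) = fun _ => 0.
Proof.
have h := Hadd A _ _ (Ga_elt0 al A) (Ga_elt0 al A).
have e : (fun _ : nat => (0 : A) + 0) = fun _ => 0 by apply: functional_extensionality => i; rewrite addr0.
rewrite e in h; apply: functional_extensionality => i.
have := congr1 (fun g => g i) h => /= /eqP.
by rewrite -{1}(addr0 (Psi A (fun=> 0) i)) (inj_eq (@addrI _ _)) eq_sym => /eqP.
Qed.

Lemma Psi_sum (A : kAlg k) N (F : nat -> nat -> A) :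
  (forall l, (l < N)%N -> Ga_elt al (F l)) ->
  Psi A (fun i => \sum_(l < N) F l i) = fun i => \sum_(l < N) Psi A (F l) i.
Proof.
elim: N => [|N IH] H.
  have -> : (fun i => \sum_(l < 0) F l i) = fun _ => 0.
    by apply: functional_extensionality => i; rewrite big_ord0.
  rewrite Psi0; apply: functional_extensionality => i; by rewrite big_ord0.
have -> : (fun i => \sum_(l < N.+1) F l i) = fun i => \sum_(l < N) F l i + F N i.
  by apply: functional_extensionality => i; rewrite big_ord_recr.
rewrite Hadd; last exact: H.
  rewrite IH; last by move=> l hl; apply: H; exact: ltnW.
  apply: functional_extensionality => i; by rewrite big_ord_recr.
apply: Ga_elt_sum => l hl; apply: H; exact: ltnW.
Qed.

Lemma Ga_elt_kmap (A : kAlg k) (d : nat -> k) (f : k -> A) :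
  f 0 = 0 -> Ga_elt al d -> Ga_elt al (fun i => f (d i)).
Proof.
move=> f0 [[n hn] ha]; split; first by exists n => i /hn ->.
move=> i; move: (ha i); case: al {ha} => // m h /h ->; exact: f0.
Qed.

Lemma Psi_D2 (d : nat -> k) : Ga_elt al d ->
  forall i, suppE (Psi (PA k) (fun i => (d i)%:P * 'X) i).
Proof.
move=> hd i.
set D := (fun i => (d i)%:P * 'X) : nat -> PA k.
have hD : Ga_elt al D by apply: (Ga_elt_kmap (PA k) d (fun c => c%:P * 'X)) => //; rewrite mul0r.
have e : forall u : B2 k, (fun i => evk u (D i)) = fun i => (d i)%:P%:P * u.
  move=> u; apply: functional_extensionality => j; by rewrite evkE evCM evX.
have hm : forall u : B2 k, Ga_elt al (fun i => evk u (D i)).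
  by move=> u; apply: Ga_elt_map => //; rewrite rmorph0.
have H : Psi (B2 k) (fun i => @evk k (B2 k) (('X : {poly k})%:P + 'X) (D i)) =
         Psi (B2 k) (fun i => @evk k (B2 k) ('X : {poly k})%:P (D i) + @evk k (B2 k) 'X (D i)).
  by congr (Psi (B2 k)); apply: functional_extensionality => j; rewrite !evkE !evCM !evX mulrDr.
rewrite Hadd ?hm // !Hnat // in H.
apply: bivar; have := congr1 (fun g => g i) H; by rewrite /= !evkE.
Qed.

Lemma Psi_mono (d : nat -> k) m : Ga_elt al d ->
  Psi (PA k) (fun i => (d i)%:P * 'X^m) = fun i => (Psi (PA k) (fun i => (d i)%:P * 'X) i) \Po 'X^m.
Proof.
move=> hd.
have hD : Ga_elt al ((fun i => (d i)%:P * 'X) : nat -> PA k).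
  by apply: (Ga_elt_kmap (PA k) d (fun c => c%:P * 'X)) => //; rewrite mul0r.
have -> : ((fun i => (d i)%:P * 'X^m) : nat -> PA k) = fun i => @evk k (PA k) 'X^m ((d i)%:P * 'X).
  by apply: functional_extensionality => j; rewrite evkE evCM evX.
rewrite (Hnat (PA k) (PA k) (@evk k (PA k) 'X^m) _ hD).
apply: functional_extensionality => j; by rewrite evkE ev_PA.
Qed.

Lemma comp_supp (b : {poly k}) m r : suppE b -> (b \Po 'X^m)`_r != 0 ->
  exists e, E k e /\ r = (m * e)%N.
Proof.
move=> hb; case: (posnP m) => [->|m0].
  rewrite expr0 -polyC1 comp_polyCr coefC; case: (eqVneq r 0%N) => [->|rn]; last by rewrite eqxx.
  move=> _; by exists 1%N; rewrite E1.
rewrite coef_comp_poly_Xn //; case: ifP => [dv|]; last by rewrite eqxx.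
move=> /hb He; exists (r %/ m)%N; split => //; by rewrite mulnC divnK.
Qed.

Lemma PsiZ m : Psi (PA k) (fun i => (0 : k)%:P * 'X^m) = fun _ => 0.
Proof.
have -> : ((fun i => (0 : k)%:P * 'X^m) : nat -> PA k) = fun _ => 0.
  by apply: functional_extensionality => j; rewrite mul0r.
exact: Psi0.
Qed.

Definition eX (l : nat) : nat -> PA k := fun i => if i == l then 'X else 0.

Lemma coef_expand (q : nat -> k) M r :
  (\sum_(m < M) (q m)%:P * 'X^m)`_r = if (r < M)%N then q r else 0.
Proof.
rewrite coef_sum.
under eq_bigr => m _ do rewrite coefCM coefXn mulr_natr mulrb.
rewrite -big_mkcond.
rewrite (eq_bigl (fun m : 'I_M => (m == r :> nat))); last by move=> m; rewrite eq_sym.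
by rewrite (big_ord1_eq _ q).
Qed.

Lemma Psi_addpart (a : nat -> PA k) l : Ga_elt al a -> Psi (PA k) a = eX l ->
  Psi (PA k) (fun i => addpart (a i)) = eX l.
Proof.
move=> ha hPa.
have [[n0 hn0] _] := ha.
set M := (\max_(i < n0) size (a i))%N.
have hM : forall i, (size (a i) <= M)%N.
  move=> i; case: (ltnP i n0) => hi; first by apply: (leq_bigmax_cond (Ordinal hi)).
  by rewrite hn0 // size_poly0.
set d1 := fun m i => if E k m then (a i)`_m else 0.
set d2 := fun m i => if E k m then 0 else (a i)`_m.
have hd1 : forall m, Ga_elt al (d1 m).
  move=> m; apply: (@Ga_elt_map al (PA k) k (fun p : {poly k} => if E k m then p`_m else 0) a) => //.
  by rewrite coef0; case: (E k m).
have hd2 : forall m, Ga_elt al (d2 m).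
  move=> m; apply: (@Ga_elt_map al (PA k) k (fun p : {poly k} => if E k m then 0 else p`_m) a) => //.
  by rewrite coef0; case: (E k m).
have hc : forall d m, Ga_elt al d -> Ga_elt al ((fun i => (d i)%:P * 'X^m) : nat -> PA k).
  by move=> d m hd; apply: (Ga_elt_kmap (PA k) d (fun c => c%:P * 'X^m)) => //; rewrite mul0r.
have hadd : Ga_elt al ((fun i => addpart (a i)) : nat -> PA k).
  by apply: (@Ga_elt_map al (PA k) (PA k) (@addpart k) a) => //; rewrite addpart0.
have hnon : Ga_elt al ((fun i => a i - addpart (a i)) : nat -> PA k).
  by apply: Ga_eltD => //; apply: Ga_eltN.
have e1 : ((fun i => addpart (a i)) : nat -> PA k) = fun i => \sum_(m < M) (d1 m i)%:P * 'X^m.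
  apply: functional_extensionality => i; apply/polyP => r.
  rewrite (coef_expand (fun m => d1 m i)) coef_addpart /d1; case: ltnP => // hr.
  by case: (E k r) => //; rewrite nth_default // (leq_trans (hM i) hr).
have e2 : ((fun i => a i - addpart (a i)) : nat -> PA k) = fun i => \sum_(m < M) (d2 m i)%:P * 'X^m.
  apply: functional_extensionality => i; apply/polyP => r.
  rewrite (coef_expand (fun m => d2 m i)) coefB coef_addpart /d2; case: ltnP => hr.
    by case: (E k r); rewrite ?subrr ?subr0.
  by rewrite nth_default ?(leq_trans (hM i) hr) //; case: (E k r); rewrite ?subrr ?subr0.
have hsplit : a = fun i => addpart (a i) + (a i - addpart (a i)).
  by apply: functional_extensionality => i; rewrite addrC subrK.
move: hPa; rewrite {1}hsplit Hadd // e1 e2 (Psi_sum (PA k) M (fun m i => (d1 m i)%:P * 'X^m)) ?(Psi_sum (PA k) M (fun m i => (d2 m i)%:P * 'X^m)); try by move=> m _; apply: hc.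
rewrite /= => H; apply: functional_extensionality => i; apply/polyP => r.
have := congr1 (fun g : nat -> {poly k} => (g i)`_r) H; rewrite /= coefD !coef_sum.
move=> H'.
have T : forall d m, Ga_elt al d -> (Psi (PA k) (fun i => (d i)%:P * 'X^m) i)`_r != 0 ->
    exists e, E k e /\ r = (m * e)%N.
  move=> d m hd; rewrite Psi_mono //; apply: comp_supp; exact: Psi_D2.
have Z1 : forall m, ~~ E k m -> ((fun i => (d1 m i)%:P * 'X^m) : nat -> PA k) = fun i => (0 : k)%:P * 'X^m.
  by move=> m Em; apply: functional_extensionality => j; rewrite /d1 (negbTE Em).
have Z2 : forall m, E k m -> ((fun i => (d2 m i)%:P * 'X^m) : nat -> PA k) = fun i => (0 : k)%:P * 'X^m.
  by move=> m Em; apply: functional_extensionality => j; rewrite /d2 Em.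
case Er: (E k r).
  rewrite -H' [X in _ = _ + X]big1 ?addr0 // => m _.
  case Em: (E k m); first by rewrite Z2 // PsiZ coef0.
  apply/eqP; apply/negP => /negP /(T _ _ (hd2 m)) [e [Ee re]].
  by move: Er; rewrite re => /Ecancel /(_ Ee); rewrite Em.
rewrite big1; last first.
  move=> m _; case Em: (E k m); last by rewrite Z1 ?Em // PsiZ coef0.
  apply/eqP; apply/negP => /negP /(T _ _ (hd1 m)) [e [Ee re]].
  by move: Er; rewrite re (Emul Em Ee).
rewrite /eX; case: (i == l); last by rewrite coef0.
rewrite coefX; case: eqP => // r1; by move: Er; rewrite r1 E1.
Qed.

Hypothesis Hsurj : forall (A : kAlg k) (s : nat -> A), Ga_elt be s ->
  exists x, Ga_elt al x /\ Psi A x = s.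

Definition aaP (l : nat) (x : nat -> PA k) : Prop :=
  Ga_elt al x /\ ((exists y, Ga_elt al y /\ Psi (PA k) y = eX l) -> Psi (PA k) x = eX l).

Definition aa (l : nat) : nat -> PA k := epsilon (inhabits (fun _ => 0)) (aaP l).

Lemma aa_spec l : aaP l (aa l).
Proof.
apply: epsilon_spec.
case: (classic (exists y, Ga_elt al y /\ Psi (PA k) y = eX l)) => [[y hy]|hn].
  by exists y; split; case: hy.
exists (fun _ => 0); split; first exact: Ga_elt0.
by move=> h; case: hn.
Qed.

Definition Ap (l : nat) : nat -> PA k := fun i => addpart (aa l i).

Lemma Ap_elt l : Ga_elt al (Ap l).
Proof.
have [h _] := aa_spec l.
by apply: (@Ga_elt_map al (PA k) (PA k) (@addpart k) (aa l)) => //; rewrite addpart0.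
Qed.

Lemma Ap_spec l : Ga_elt be (eX l) -> Psi (PA k) (Ap l) = eX l.
Proof.
move=> he; have [h1 h2] := aa_spec l.
apply: Psi_addpart => //; apply: h2; exact: Hsurj.
Qed.

Definition bnd (B : kAlg k) (v : nat -> B) : nat :=
  epsilon (inhabits 0%N) (fun n => forall i, (n <= i)%N -> v i = 0).
Arguments bnd {B}.

Definition Sig (B : kAlg k) (v : nat -> B) : nat -> B :=
  fun i => \sum_(l < bnd v) ev (v l) (Ap l i).
Arguments Sig {B}.

Lemma Sig_any (B : kAlg k) (v : nat -> B) M : (forall i, (M <= i)%N -> v i = 0) ->
  Sig v = fun i => \sum_(l < M) ev (v l) (Ap l i).
Proof.
move=> hM.
have hb : forall i, (bnd v <= i)%N -> v i = 0.
  by apply: (epsilon_spec (inhabits 0%N) (fun n => forall i, (n <= i)%N -> v i = 0)); exists M.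
apply: functional_extensionality => i; rewrite /Sig.
rewrite -(@sum_tail _ (bnd v) (maxn (bnd v) M) (fun l => ev (v l) (Ap l i))) ?leq_maxl //; last first.
  by move=> l hl _; rewrite hb // ev_supp0 //; exact: addpart_supp.
rewrite (@sum_tail _ M (maxn (bnd v) M) (fun l => ev (v l) (Ap l i))) ?leq_maxr //.
by move=> l hl _; rewrite hM // ev_supp0 //; exact: addpart_supp.
Qed.
Arguments Sig_any {B v M}.

Lemma Sig_elt (B : kAlg k) (v : nat -> B) : Ga_elt be v -> Ga_elt al (Sig v).
Proof.
move=> [[n hn] _]; rewrite (Sig_any hn).
apply: (@Ga_elt_sum al B n (fun l i => ev (v l) (Ap l i))) => l _.
by apply: (@Ga_elt_map al (PA k) B (ev (v l)) (Ap l)); [exact: ev0|exact: Ap_elt].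
Qed.

Lemma Sig_add (B : kAlg k) (v w : nat -> B) : Ga_elt be v -> Ga_elt be w ->
  Sig (fun i => v i + w i) = fun i => Sig v i + Sig w i.
Proof.
move=> [[n hn] _] [[m hm] _].
have hv : forall i, (maxn n m <= i)%N -> v i = 0 by move=> i; rewrite geq_max => /andP[/hn -> _].
have hw : forall i, (maxn n m <= i)%N -> w i = 0 by move=> i; rewrite geq_max => /andP[_ /hm ->].
have hvw : forall i, (maxn n m <= i)%N -> v i + w i = 0 by move=> i h; rewrite hv // hw // addr0.
rewrite (Sig_any hv) (Sig_any hw) (Sig_any hvw); apply: functional_extensionality => i.
rewrite -big_split /=; apply: eq_bigr => l _; apply: ev_suppD; exact: addpart_supp.
Qed.

Lemma Sig_nat (A B : kAlg k) (f : kHom A B) (v : nat -> A) : Ga_elt be v ->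
  Sig (fun i => f (v i)) = fun i => f (Sig v i).
Proof.
move=> [[n hn] _].
have hf : forall i, (n <= i)%N -> f (v i) = 0 by move=> i /hn ->; rewrite rmorph0.
rewrite (Sig_any hn) (Sig_any hf); apply: functional_extensionality => i.
rewrite rmorph_sum; apply: eq_bigr => l _; by rewrite ev_nat.
Qed.

Lemma Sig_inv (B : kAlg k) (v : nat -> B) : Ga_elt be v -> Psi B (Sig v) = v.
Proof.
move=> hv; have [[n hn] hbe] := hv.
rewrite (Sig_any hn) (Psi_sum B n (fun l i => ev (v l) (Ap l i))); last first.
  move=> l _; by apply: (@Ga_elt_map al (PA k) B (ev (v l)) (Ap l)); [exact: ev0|exact: Ap_elt].
have W : forall l, Psi B (fun i => ev (v l) (Ap l i)) = fun i => if i == l then v l else 0.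
  move=> l; case: (eqVneq (v l) 0) => [v0|vn0].
    have -> : (fun i => ev (v l) (Ap l i)) = fun _ => 0.
      by apply: functional_extensionality => i; rewrite v0 ev_supp0 //; exact: addpart_supp.
    by rewrite Psi0; apply: functional_extensionality => i; rewrite v0; case: (i == l).
  have he : Ga_elt be (eX l).
    split; first by exists l.+1 => i hi; rewrite /eX (gtn_eqF hi).
    move=> i; move: (hbe i) (hbe l); case: be {hv hbe} => // b h1 h2 hi.
    rewrite /eX; case: eqP => // il; move: hi; rewrite il => hl.
    by move: vn0; rewrite h2 // eqxx.
  have -> : (fun i => ev (v l) (Ap l i)) = fun i => @evk k B (v l) (Ap l i) by [].
  rewrite (Hnat (PA k) B (@evk k B (v l)) _ (Ap_elt l)) Ap_spec //.
  apply: functional_extensionality => i; rewrite evkE /eX; case: (i == l); by rewrite ?evX ?ev0.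
apply: functional_extensionality => i.
under eq_bigr => l _ do rewrite W eq_sym.
rewrite -big_mkcond (big_ord1_eq _ v); case: ltnP => // hi; by rewrite hn.
Qed.

Theorem KL : exists Sg : forall A : kAlg k, (nat -> A) -> nat -> A,
  (forall A v, Ga_elt be v -> Ga_elt al (Sg A v)) /\
  (forall A v w, Ga_elt be v -> Ga_elt be w -> Sg A (fun i => v i + w i) = fun i => Sg A v i + Sg A w i) /\
  (forall A B (f : kHom A B) v, Ga_elt be v -> Sg B (fun i => f (v i)) = fun i => f (Sg A v i)) /\
  (forall A v, Ga_elt be v -> Psi A (Sg A v) = v).
Proof.
exists (fun A v => @Sig A v); split; first by move=> A v; exact: Sig_elt.
split; first by move=> A v w; exact: Sig_add.
split; first by move=> A B f v; exact: Sig_nat.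
by move=> A v; exact: Sig_inv.
Qed.

End KL.

Set Implicit Arguments. Unset Strict Implicit. Unset Printing Implicit Defensive.
Import GRing.Theory.
Local Open Scope ring_scope.

Definition Jf (sel : nat -> bool) (idx : nat -> nat) (A : Type) (u v : nat -> A) : nat -> A :=
  fun i => if sel i then u (idx i) else v (idx i).

Definition pairing (ga be de : option nat) (sel : nat -> bool) (idx : nat -> nat) : Prop :=
  forall A : comPzRingType,
   (forall u v : nat -> A, Ga_elt ga u -> Ga_elt be v -> Ga_elt de (Jf sel idx u v)) /\
   (forall w : nat -> A, Ga_elt de w -> exists u v, Ga_elt ga u /\ Ga_elt be v /\ w = Jf sel idx u v) /\
   (forall u v : nat -> A, Ga_elt ga u -> Ga_elt be v -> (forall i, Jf sel idx u v i = 0) ->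
       (forall i, u i = 0) /\ (forall i, v i = 0)).

Lemma pairing_swap ga be de sel idx : pairing ga be de sel idx ->
  pairing be ga de (fun i => ~~ sel i) idx.
Proof.
move=> H A; have [h1 [h2 h3]] := H A.
have e : forall u v : nat -> A, Jf (fun i => ~~ sel i) idx u v = Jf sel idx v u.
  by move=> u v; apply: functional_extensionality => i; rewrite /Jf; case: (sel i).
split; first by move=> u v hu hv; rewrite e; apply: h1.
split; first by move=> w /h2 [u [v [hu [hv ->]]]]; exists v, u; rewrite e.
move=> u v hu hv; rewrite e => /(h3 _ _ hv hu) [? ?]; by split.
Qed.

Lemma pairing_fin g be :
  pairing (Some g) be (if be is Some b then Some (g + b)%N else None)
    (fun i => (i < g)%N) (fun i => if (i < g)%N then i else (i - g)%N).
Proof.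
move=> A; split.
  move=> u v [_ hu] [[m hm] hv]; split.
    exists (g + m)%N => i hi; rewrite /Jf; case: ltnP => hig; first by have := ltn_addr m hig; rewrite ltnNge hi.
    by apply: hm; rewrite leq_subRL.
  move=> i; move: (hv (i - g)%N); case: be {hv} => // b hb hi; rewrite /Jf; case: ltnP => hig.
    by have := ltn_addr b hig; rewrite ltnNge hi.
  by apply: hb; rewrite leq_subRL.
split.
  move=> w [[n hn] hw]; exists (fun i => if (i < g)%N then w i else 0), (fun j => w (j + g)%N).
  split; first by split; [exists g => i; rewrite ltnNge => ->|move=> i /= hi; rewrite ltnNge hi].
  split.
    split; first by exists n => j hj; apply: hn; exact: leq_trans hj (leq_addr _ _).
    move=> j; move: (hw (j + g)%N); case: be {hw} => // b hb hj; apply: hb; by rewrite addnC leq_add2r.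
  apply: functional_extensionality => i; rewrite /Jf; case: ltnP => hig; first by rewrite hig.
  by rewrite subnK.
move=> u v [_ hu] _ H; split.
  move=> i; case: (ltnP i g) => hig; last exact: hu.
  by have := H i; rewrite /Jf hig.
by move=> j; have := H (j + g)%N; rewrite /Jf ltnNge leq_addl /= addnK.
Qed.

Lemma pairing_inf : pairing None None None (fun i => ~~ odd i) (fun i => i./2).
Proof.
move=> A; split.
  move=> u v [[n hn] _] [[m hm] _]; split => //.
  exists (maxn n m).*2 => i hi; rewrite /Jf.
  have h : (maxn n m <= i./2)%N by rewrite -[maxn n m]doubleK; exact: half_leq.
  by case: (odd i) => /=; [apply: hm|apply: hn]; apply: leq_trans h; rewrite ?leq_maxl ?leq_maxr.
split.
  move=> w [[n hn] _]; exists (fun j => w j.*2), (fun j => w j.*2.+1).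
  split; first by split => //; exists n => j hj; apply: hn; rewrite (leq_trans hj) // -addnn leq_addl.
  split; first by split => //; exists n => j hj; apply: hn; rewrite (leq_trans hj) // -addnn leqW // leq_addl.
  apply: functional_extensionality => i; rewrite /Jf.
  by case: ifP => ho; congr w; rewrite -{1}(odd_double_half i); move: ho; case: (odd i).
move=> u v _ _ H; split.
  by move=> j; have := H j.*2; rewrite /Jf odd_double /= doubleK.
by move=> j; have := H j.*2.+1; rewrite /Jf /= odd_double /= uphalf_double.
Qed.

Lemma pairing_ex ga be : exists de sel idx, pairing ga be de sel idx.
Proof.
case: ga => [g|]; first by do 3 eexists; apply: pairing_fin.
case: be => [b|]; last by do 3 eexists; apply: pairing_inf.
do 3 eexists; apply: pairing_swap; exact: pairing_fin.
Qed.

Unset Implicit Arguments.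
Unset Strict Implicit. Unset Printing Implicit Defensive.
Import GRing.Theory.
Local Open Scope ring_scope.

Section Merge.
Variable k : fieldType.

Definition isoP (G : kFunctor k) (S T : forall A : kAlg k, G A -> Prop) (alpha : option nat)
  (phi : forall A : kAlg k, G A -> nat -> A) : Prop :=
    (forall (A : kAlg k) x y i, T A x -> T A y -> phi A (x + y) i = phi A x i + phi A y i) /\
    (forall (A : kAlg k) x, T A x -> Ga_elt alpha (phi A x)) /\
    (forall (A : kAlg k) (s : nat -> A), Ga_elt alpha s -> exists x, T A x /\ phi A x = s) /\
    (forall (A : kAlg k) x, T A x -> ((forall i, phi A x i = 0) <-> S A x)) /\
    (forall (A B : kAlg k) (f : kHom A B) x i, T A x ->
        phi B (kF_map f x) i = f (phi A x i)).

Lemma isoP_ex G S T al : @subquot_iso_Ga k G S T al <-> exists phi, isoP G S T al phi.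
Proof. by []. Qed.

Lemma kF_map0 (G : kFunctor k) (A B : kAlg k) (f : kHom A B) : kF_map f (0 : G A) = 0.
Proof.
apply/eqP; rewrite -(inj_eq (@addrI _ (kF_map f (0 : G A)))) addr0 -kF_map_add addr0 //.
Qed.

Lemma kF_mapB (G : kFunctor k) (A B : kAlg k) (f : kHom A B) (x y : G A) :
  kF_map f (x - y) = kF_map f x - kF_map f y.
Proof.
apply/eqP; rewrite eq_sym subr_eq -kF_map_add subrK //.
Qed.

Variables (G : kFunctor k) (S U T : forall A : kAlg k, G A -> Prop) (ga be : option nat).
Hypothesis hSU : forall A x, S A x -> U A x.
Hypothesis hUT : forall A x, U A x -> T A x.
Hypothesis hT0 : forall A, T A 0.
Hypothesis hTB : forall A x y, T A x -> T A y -> T A (x - y).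
Variables (phi1 psi : forall A : kAlg k, G A -> nat -> A).
Hypothesis hphi1 : isoP G S U ga phi1.
Hypothesis hpsi : isoP G U T be psi.
Variable rho : forall A : kAlg k, (nat -> A) -> G A.
Hypothesis hrT : forall A v, Ga_elt be v -> T A (rho A v).
Hypothesis hradd : forall A v w, Ga_elt be v -> Ga_elt be w ->
  rho A (fun i => v i + w i) = rho A v + rho A w.
Hypothesis hrnat : forall A B (f : kHom A B) v, Ga_elt be v ->
  rho B (fun i => f (v i)) = kF_map f (rho A v).
Hypothesis hrinv : forall A v, Ga_elt be v -> psi A (rho A v) = v.

Lemma merge_iso : exists de, @subquot_iso_Ga k G S T de.
Proof.
have [de [sel [idx hp]]] := pairing_ex ga be.
exists de.
have [p1add [p1elt [p1surj [p1ker p1nat]]]] := hphi1.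
have [padd [pelt [psurj [pker pnat]]]] := hpsi.
have G0 : forall A : kAlg k, Ga_elt be (fun _ => 0 : A).
  by move=> A; split; [exists 0%N|case: be].
have rho0 : forall A, rho A (fun _ => 0) = 0.
  move=> A; have h := hradd A _ _ (G0 A) (G0 A).
  have e : (fun _ : nat => (0 : A) + 0) = fun _ => 0 by apply: functional_extensionality => i; rewrite addr0.
  rewrite e in h; apply/eqP; move/eqP: h.
  by rewrite -{1}(addr0 (rho A (fun=> 0))) (inj_eq (@addrI _ _)) eq_sym.
have padd_f : forall A x y, T A x -> T A y -> psi A (x + y) = fun i => psi A x i + psi A y i.
  by move=> A x y hx hy; apply: functional_extensionality => i; apply: padd.
pose y := fun A x => x - rho A (psi A x).
have hyT : forall A x, T A x -> T A (y A x).
  by move=> A x hx; apply: hTB => //; apply: hrT; apply: pelt.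
have hyU : forall A x, T A x -> U A (y A x).
  move=> A x hx; apply: (proj1 (pker A _ (hyT A x hx))) => i.
  have := padd A (y A x) (rho A (psi A x)) i (hyT A x hx) (hrT A _ (pelt A x hx)).
  rewrite /y subrK hrinv; last exact: pelt.
  by move/eqP; rewrite -{1}(add0r (psi A x i)) (inj_eq (@addIr _ _)) eq_sym => /eqP.
have hT2 : forall A x y, T A x -> T A y -> T A (x + y).
  move=> A x y0 hx hy; rewrite -[y0]opprK -(sub0r y0); apply: hTB => //; exact: hTB.
exists (fun A x => Jf sel idx (phi1 A (y A x)) (psi A x)).
split.
  move=> A x x' i hx hx'; rewrite /Jf.
  have e : y A (x + x') = y A x + y A x'.
    by rewrite /y (padd_f A x x' hx hx') hradd; [by rewrite opprD addrACA|apply: pelt..].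
  rewrite e; case: (sel i); first by apply: p1add; apply: hyU.
  by apply: padd.
split.
  move=> A x hx; apply: (proj1 (hp A)); [apply: p1elt; exact: hyU|exact: pelt].
split.
  move=> A w hw; have [u [v [hu [hv ->]]]] := proj1 (proj2 (hp A)) w hw.
  have [z [hz <-]] := p1surj A u hu.
  have hzT : T A z by apply: hUT.
  have hps : psi A (z + rho A v) = v.
    rewrite padd_f //; last exact: hrT.
    apply: functional_extensionality => i; rewrite hrinv //.
    by rewrite (proj2 (pker A z hzT) hz i) add0r.
  exists (z + rho A v); split; first by apply: hT2 => //; exact: hrT.
  by rewrite /y hps addrK.
split.
  move=> A x hx; split.
    move=> H; have [h1 h2] := proj2 (proj2 (hp A)) _ _ (p1elt _ _ (hyU A x hx)) (pelt A x hx) H.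
    have ep : psi A x = fun _ => 0 by apply: functional_extensionality.
    have ey : y A x = x by rewrite /y ep rho0 subr0.
    have := hyU A x hx; rewrite ey => hU.
    by apply: (proj1 (p1ker A x hU)); rewrite -ey.
  move=> hS; have hU := hSU A x hS.
  have ep : psi A x = fun _ => 0.
    by apply: functional_extensionality => i; apply: (proj2 (pker A x hx)).
  have ey : y A x = x by rewrite /y ep rho0 subr0.
  move=> i; rewrite /Jf ey ep; case: (sel i) => //.
  by apply: (proj2 (p1ker A x hU)).
move=> A B f x i hx.
have ep : psi B (kF_map f x) = fun j => f (psi A x j).
  by apply: functional_extensionality => j; apply: pnat.
have ey : y B (kF_map f x) = kF_map f (y A x).
  by rewrite /y ep hrnat ?kF_mapB //; apply: pelt.
rewrite /Jf ey ep; case: (sel i); last by [].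
by apply: p1nat; apply: hyU.
Qed.

End Merge.

Unset Implicit Arguments.
Unset Strict Implicit. Unset Printing Implicit Defensive.
Import GRing.Theory.
Local Open Scope ring_scope.

Section GL.
Variable k : fieldType.
Variables (G : kFunctor k) (al : option nat) (Pi : forall A : kAlg k, (nat -> A) -> G A).
Hypothesis hPadd : forall A s t, Ga_elt al s -> Ga_elt al t ->
  Pi A (fun i => s i + t i) = Pi A s + Pi A t.
Hypothesis hPnat : forall A B (f : kHom A B) s, Ga_elt al s ->
  Pi B (fun i => f (s i)) = kF_map f (Pi A s).

Lemma GL n : forall (Fi : nat -> forall A : kAlg k, G A -> Prop),
  (forall i, is_subfunctor (Fi i)) ->
  (forall i A x, (i < n)%N -> Fi i A x -> Fi i.+1 A x) ->
  (forall i, (i < n)%N -> exists a, subquot_iso_Ga (Fi i) (Fi i.+1) a) ->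
  (forall A s, Ga_elt al s -> Fi n A (Pi A s)) ->
  (forall A x, Fi n A x -> exists s, Ga_elt al s /\ Fi 0%N A (x - Pi A s)) ->
  exists be, subquot_iso_Ga (Fi 0%N) (Fi n) be.
Proof.
elim: n => [|n IH] Fi hsub hchain hiso hPin hsurj.
  exists (Some 0%N); exists (fun A _ _ => 0); split; first by move=> *; rewrite addr0.
  split; first by move=> A x _; split; [exists 0%N|].
  split.
    move=> A s [_ hs]; exists 0; split; first by case: (hsub 0%N).
    by apply: functional_extensionality => i; rewrite hs.
  split; first by move=> A x hx; split => // _ i.
  by move=> A B f x i _; rewrite rmorph0.
have chain : forall i j A x, (i <= j)%N -> (j <= n.+1)%N -> Fi i A x -> Fi j A x.
  move=> i j A x hij hj; elim: j hij hj => [|j IHj]; first by rewrite leqn0 => /eqP ->.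
  rewrite leq_eqVlt => /orP[/eqP -> //|]; rewrite ltnS => hij hj hx.
  by apply: hchain; [exact: hj|apply: IHj => //; exact: ltnW].
have [be hbe] : exists be, subquot_iso_Ga (Fi 1%N) (Fi n.+1) be.
  apply: (IH (fun i => Fi i.+1)) => //.
  - by move=> i A x hi; apply: hchain.
  - by move=> i hi; apply: hiso.
  - move=> A x hx; have [s [hs h0]] := hsurj A x hx; exists s; split => //.
    by apply: hchain.
have [ga hga] := hiso 0%N isT.
have [phi1 hphi1] := hga.
have [psi hpsi] := hbe.
have hpsi' := hpsi; have [padd [pelt [psurj [pker pnat]]]] := hpsi'.
have hT : forall A, Fi n.+1 A 0 by move=> A; case: (hsub n.+1).
have hTB : forall A x y, Fi n.+1 A x -> Fi n.+1 A y -> Fi n.+1 A (x - y).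
  by move=> A x y; case: (hsub n.+1) => _ [h _]; apply: h.
pose Psi := fun (A : kAlg k) (s : nat -> A) => psi A (Pi A s).
have [Sg [Selt [Sadd [Snat Sinv]]]] : exists Sg : forall A : kAlg k, (nat -> A) -> nat -> A,
  (forall A v, Ga_elt be v -> Ga_elt al (Sg A v)) /\
  (forall A v w, Ga_elt be v -> Ga_elt be w -> Sg A (fun i => v i + w i) = fun i => Sg A v i + Sg A w i) /\
  (forall A B (f : kHom A B) v, Ga_elt be v -> Sg B (fun i => f (v i)) = fun i => f (Sg A v i)) /\
  (forall A v, Ga_elt be v -> Psi A (Sg A v) = v).
  apply: (@KL k al be Psi).
  - move=> A s t hs ht; apply: functional_extensionality => i.
    by rewrite /Psi hPadd // padd //; apply: hPin.
  - move=> A B f s hs; apply: functional_extensionality => i.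
    by rewrite /Psi hPnat // pnat //; apply: hPin.
  - move=> A v hv; have [x [hx <-]] := psurj A v hv.
    have [s [hs h0]] := hsurj A x hx; exists s; split => //.
    have h1 : Fi 1%N A (x - Pi A s) by apply: hchain.
    apply: functional_extensionality => i; rewrite /Psi.
    have := padd A (x - Pi A s) (Pi A s) i (hTB A _ _ hx (hPin A s hs)) (hPin A s hs).
    by rewrite subrK (proj2 (pker A _ (hTB A _ _ hx (hPin A s hs))) h1 i) add0r.
have hSU : forall A x, Fi 0%N A x -> Fi 1%N A x by move=> A x; apply: hchain.
have hUT : forall A x, Fi 1%N A x -> Fi n.+1 A x by move=> A x; apply: chain.
apply: (merge_iso k G (Fi 0%N) (Fi 1%N) (Fi n.+1) ga be hSU hUT hT hTB phi1 psi hphi1 hpsi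
  (fun A v => Pi A (Sg A v))).

- by move=> A v hv /=; apply: hPin; apply: Selt.
- by move=> A v w hv hw /=; rewrite Sadd // hPadd //; apply: Selt.
- by move=> A B f v hv /=; rewrite Snat // hPnat //; apply: Selt.
- by move=> A v hv /=; have := Sinv A v hv.
Qed.

End GL.

Unset Implicit Arguments.
Unset Strict Implicit. Unset Printing Implicit Defensive.
Import GRing.Theory.
Local Open Scope ring_scope.

Theorem mainTheorem8_aux (k : fieldType) (F G : kFunctor k) (pi : kNat F G) :
  strictly_additive F -> Defs.additive G -> kEpi pi -> strictly_additive G.
Proof.
move=> [al hF] [n [Fi [hsub [h0 [hn [hchain hiso]]]]]] hepi.
have [phF [Fadd [Felt [Fsurj [Fker Fnat]]]]] := hF.
have inj : forall A (x x' : F A), phF A x = phF A x' -> x = x'.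
  move=> A x x' e; apply/eqP; rewrite -subr_eq0; apply/eqP.
  apply: (proj1 (Fker A (x - x') I)) => i.
  have := Fadd A (x - x') x' i I I; rewrite subrK e => /eqP.
  by rewrite -{1}(add0r (phF A x' i)) (inj_eq (@addIr _ _)) eq_sym => /eqP.
pose ch := fun (A : kAlg k) (s : nat -> A) => epsilon (inhabits (0 : F A)) (fun x => phF A x = s).
pose Pi := fun (A : kAlg k) (s : nat -> A) => pi A (ch A s).
have PiE : forall A s x, phF A x = s -> Pi A s = pi A x.
  move=> A s x hx; rewrite /Pi; congr (pi A _); apply: inj; rewrite hx.
  by apply: (epsilon_spec (inhabits (0 : F A)) (fun x => phF A x = s)); exists x.
have surjF : forall A s, Ga_elt al s -> exists x, phF A x = s.
  by move=> A s hs; have [x [_ hx]] := Fsurj A s hs; exists x.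
have hPadd : forall A s t, Ga_elt al s -> Ga_elt al t ->
    Pi A (fun i => s i + t i) = Pi A s + Pi A t.
  move=> A s t hs ht; have [x hx] := surjF A s hs; have [y hy] := surjF A t ht.
  rewrite (PiE A s x hx) (PiE A t y hy) (PiE A _ (x + y)) ?kN_add //.
  by apply: functional_extensionality => i; rewrite Fadd // hx hy.
have hPnat : forall A B (f : kHom A B) s, Ga_elt al s ->
    Pi B (fun i => f (s i)) = kF_map f (Pi A s).
  move=> A B f s hs; have [x hx] := surjF A s hs.
  rewrite (PiE A s x hx) (PiE B _ (kF_map f x)) ?kN_natural //.
  by apply: functional_extensionality => i; rewrite Fnat // hx.
have hsurjG : forall A x, Fi n A x -> exists s, Ga_elt al s /\ Fi 0%N A (x - Pi A s).
  move=> A x _; have [z hz] := hepi A x; exists (phF A z); split; first exact: Felt.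
  by rewrite (PiE A _ z) // hz; apply/h0; rewrite subrr.
have [be hbe] := GL k G al Pi hPadd hPnat n Fi hsub hchain hiso
  (fun A s _ => hn A (Pi A s)) hsurjG.
have [phi [p1 [p2 [p3 [p4 p5]]]]] := hbe.
exists be, phi; split; first by move=> A x y i _ _; apply: p1.
split; first by move=> A x _; apply: p2.
split; first by move=> A s hs; have [x [_ hx]] := p3 A s hs; exists x.
split; last by move=> A B f x i _; apply: p5.
move=> A x _; rewrite -(h0 A x); exact: p4.
Qed.

End Aux.

Theorem mainTheorem8 (k : fieldType) (F G : kFunctor k) (pi : kNat F G) :
  strictly_additive F -> additive G -> kEpi pi -> strictly_additive G.
Proof.
exact: (@Aux.mainTheorem8_aux k F G pi).
Qed.
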